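(* Let $\psi:\mathbb{R}^n\to\mathbb{R}$, $\psi(x)=u^Tx$ with $u\in\mathbb{Z}^n$, let $C,D\subseteq\mathbb{R}^n$ be lattice polytopes and $w\in\mathbb{R}^n$. Then \begin{align*} &\Sigma_\psi(\mathrm{face}_w(C),\mathrm{face}_w(D))+\sum_{i=\psi_{C+D}}^{\psi_{\mathrm{face}_w(C+D)}-1}[C+D]_i+\sum_{i=\psi^{\mathrm{face}_w(C+D)}}^{\psi^{C+D}-1}[C+D]_i\\ &=\mathrm{face}_w\Sigma_\psi(C,D)+\sum_{i=\psi_C}^{\psi_{\mathrm{face}_w(C)}-1}[C]_i+\sum_{i=\psi^{\mathrm{face}_w(C)}}^{\psi^C-1}[C]_i+\sum_{i=\psi_D}^{\psi_{\mathrm{face}_w(D)}-1}[D]_i+\sum_{i=\psi^{\mathrm{face}_w(D)}}^{\psi^D-1}[D]_i . \end{align*}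
   Context: For a polytope $Q$, $\mathrm{face}_w(Q)=\arg\max_{x\in Q}w^Tx$. For a lattice polytope $Q$, $\psi_Q=\min_{x\in Q}\psi(x)$ and $\psi^Q=\max_{x\in Q}\psi(x)$. The fiber polytope is the Minkowski integral $\Sigma_\psi(Q)=\int_{\psi(Q)}(\psi^{-1}(x)\cap Q)\,dx$, which for lattice polytopes equals $\sum_{i=\psi_Q}^{\psi^Q-1}(\psi^{-1}(i+\frac12)\cap Q)$. The mixed fiber polytope $\Sigma_\psi(C,D)$ is the coefficient of $\lambda_1\lambda_2$ in $\Sigma_\psi(\lambda_1C+\lambda_2D)=\lambda_1^2M_{20}+\lambda_1\lambda_2M_{11}+\lambda_2^2M_{02}$, i.e. $\Sigma_\psi(C,D)=M_{11}$. For $i\in\mathbb{Z}$ and a polytope $Q$, $[Q]_i:=\arg\max_{x\in Q\cap\psi^{-1}(i+\frac12)}w^Tx$; sums of these sets are Minkowski sums. *)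

(* Defs.v *)
From HB Require Import structures.
From mathcomp Require Import all_boot all_order all_algebra.
From Stdlib Require Import ClassicalEpsilon.
Set Implicit Arguments. Unset Strict Implicit. Unset Printing Implicit Defensive.
Import Order.TTheory GRing.Theory Num.Theory.
Local Open Scope ring_scope.

Section Polytopes.
Variables (R : realFieldType) (n : nat).

Definition mset := 'rV[R]_n -> Prop.

Definition seteq (A B : mset) : Prop := forall x, A x <-> B x.

Definition dotp (a b : 'rV[R]_n) : R := \sum_(j < n) a 0 j * b 0 j.

Definition psi (u : 'rV[int]_n) (x : 'rV[R]_n) : R :=
  \sum_(j < n) (u 0 j)%:~R * x 0 j.

Definition msum (A B : mset) : mset :=
  fun x => exists a b, A a /\ B b /\ x = a + b.
Definition mzero : mset := fun x => x = 0.
Definition mscale (t : R) (A : mset) : mset :=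
  fun x => exists a, A a /\ x = t *: a.

Definition conv (S : seq 'rV[R]_n) : mset :=
  fun x => exists c : 'I_(size S) -> R,
    (forall i, 0 <= c i) /\ \sum_(i < size S) c i = 1 /\
    x = \sum_(i < size S) c i *: S`_i.

Definition is_polytope (Q : mset) : Prop :=
  exists S : seq 'rV[R]_n, S != [::] /\ seteq Q (conv S).

Definition integral_point (x : 'rV[R]_n) : Prop :=
  forall j, exists z : int, x 0 j = z%:~R.

Definition lattice_polytope (Q : mset) : Prop :=
  exists S : seq 'rV[R]_n, S != [::] /\ (forall x, x \in S -> integral_point x)
    /\ seteq Q (conv S).

Definition face (w : 'rV[R]_n) (Q : mset) : mset :=
  fun x => Q x /\ forall y, Q y -> dotp w y <= dotp w x.

(* psi_Q = min_{x in Q} psi(x), psi^Q = max_{x in Q} psi(x); for lattice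
   polytopes these are integers, chosen here by (classical) description. *)
Definition is_min_val (u : 'rV[int]_n) (Q : mset) (m : R) : Prop :=
  (exists x, Q x /\ psi u x = m) /\ forall x, Q x -> m <= psi u x.
Definition is_max_val (u : 'rV[int]_n) (Q : mset) (m : R) : Prop :=
  (exists x, Q x /\ psi u x = m) /\ forall x, Q x -> psi u x <= m.

Definition psi_lo (u : 'rV[int]_n) (Q : mset) : int :=
  epsilon (inhabits 0%R) (fun z : int => is_min_val u Q z%:~R).
Definition psi_hi (u : 'rV[int]_n) (Q : mset) : int :=
  epsilon (inhabits 0%R) (fun z : int => is_max_val u Q z%:~R).

(* Minkowski sum  sum_{i=a}^{b-1} F i  (empty sum = {0} if b <= a) *)
Definition msum_range (a b : int) (F : int -> mset) : mset :=
  let N := if a < b then absz (b - a) else 0%N in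
  foldr msum mzero [seq F (a + k%:Z) | k <- iota 0 N].

Definition slice (u : 'rV[int]_n) (Q : mset) (i : int) : mset :=
  fun x => Q x /\ psi u x = i%:~R + 2^-1.

Definition bracket (u : 'rV[int]_n) (w : 'rV[R]_n) (Q : mset) (i : int) : mset :=
  face w (slice u Q i).

Definition fiber (u : 'rV[int]_n) (Q : mset) : mset :=
  msum_range (psi_lo u Q) (psi_hi u Q) (slice u Q).

(* M is the mixed fiber polytope Sigma_psi(C,D): the coefficient M11 of
   l1 l2 in Sigma_psi(l1 C + l2 D) = l1^2 M20 + l1 l2 M11 + l2^2 M02
   (identity of polytopes, imposed for all natural l1, l2, for which
   l1 C + l2 D is again a lattice polytope). *)
Definition is_mixed_fiber (u : 'rV[int]_n) (C D M : mset) : Prop :=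
  exists M20 M02 : mset,
    is_polytope M20 /\ is_polytope M02 /\ is_polytope M /\
    forall l1 l2 : nat,
      seteq (fiber u (msum (mscale l1%:R C) (mscale l2%:R D)))
            (msum (msum (mscale (l1 ^ 2)%:R M20) (mscale (l1 * l2)%:R M))
                  (mscale (l2 ^ 2)%:R M02)).

End Polytopes.

(* Main.v *)
Require Import Defs.
From HB Require Import structures.
From mathcomp Require Import all_boot all_order all_algebra.
From Stdlib Require Import ClassicalEpsilon FunctionalExtensionality PropExtensionality.
Set Implicit Arguments. Unset Strict Implicit. Unset Printing Implicit Defensive.
Import Order.TTheory GRing.Theory Num.Theory.
Local Open Scope ring_scope.

Section Basic.
Variables (R : realFieldType) (n : nat).
Local Notation vec := 'rV[R]_n.
Local Notation mset := (mset R n).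

Lemma mext (A B : mset) : (forall x, A x <-> B x) -> A = B.
Proof.
move=> h; apply: functional_extensionality => x.
by apply: propositional_extensionality.
Qed.

Lemma seteqE (A B : mset) : seteq A B -> A = B.
Proof. exact: mext. Qed.

Lemma msumC (A B : mset) : msum A B = msum B A.
Proof.
apply: mext => x; split=> -[a [b [Ha [Hb ->]]]];
  by exists b, a; rewrite addrC.
Qed.

Lemma msumA (A B E : mset) : msum A (msum B E) = msum (msum A B) E.
Proof.
apply: mext => x; split.
- move=> [a [y [Ha [[b [e [Hb [He ->]]]] ->]]]].
  exists (a + b), e; split; last split=> //; last by rewrite addrA.
  by exists a, b.
- move=> [y [e [[a [b [Ha [Hb ->]]]] [He ->]]]].
  exists a, (b + e); split=> //; split; last by rewrite addrA.
  by exists b, e.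
Qed.

Lemma msum0r (A : mset) : msum A (@mzero R n) = A.
Proof.
apply: mext => x; split.
- by move=> [a [b [Ha [-> ->]]]]; rewrite addr0.
- by move=> Hx; exists x, 0; rewrite addr0.
Qed.

Lemma msum0l (A : mset) : msum (@mzero R n) A = A.
Proof. by rewrite msumC msum0r. Qed.

Lemma msumCA (A B E : mset) : msum A (msum B E) = msum B (msum A E).
Proof. by rewrite msumA (msumC A) -msumA. Qed.

Lemma mscale1 (A : mset) : mscale 1 A = A.
Proof.
apply: mext => x; split; first by move=> [a [Ha ->]]; rewrite scale1r.
by move=> Hx; exists x; rewrite scale1r.
Qed.

Lemma mscale0 (A : mset) : (exists a, A a) -> mscale 0 A = @mzero R n.
Proof.
move=> [a Ha]; apply: mext => x; split; first by move=> [b [_ ->]]; rewrite scale0r.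
by move=> ->; exists a; rewrite scale0r.
Qed.

Lemma psiD u (a b : vec) : psi u (a + b) = psi u a + psi u b.
Proof. by rewrite /psi -big_split; apply: eq_bigr => j _; rewrite mxE mulrDr. Qed.
Lemma psiZ u k (a : vec) : psi u (k *: a) = k * psi u a.
Proof. by rewrite /psi mulr_sumr; apply: eq_bigr => j _; rewrite mxE mulrCA. Qed.
Lemma psi0 u : psi u (0 : vec) = 0.
Proof. by rewrite /psi big1 // => j _; rewrite mxE mulr0. Qed.
Lemma psi_sum u m (c : 'I_m -> R) (s : 'I_m -> vec) :
  psi u (\sum_i c i *: s i) = \sum_i c i * psi u (s i).
Proof.
rewrite (big_morph (psi u) (psiD u) (psi0 u)).
by apply: eq_bigr => i _; rewrite psiZ.
Qed.
Lemma psiN u (x : vec) : psi (- u) x = - psi u x.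
Proof.
rewrite /psi -sumrN; apply: eq_bigr => j _.
by rewrite mxE intrN mulNr.
Qed.

Lemma dotpD w (a b : vec) : dotp w (a + b) = dotp w a + dotp w b.
Proof. by rewrite /dotp -big_split; apply: eq_bigr => j _; rewrite mxE mulrDr. Qed.
Lemma dotpZ w k (a : vec) : dotp w (k *: a) = k * dotp w a.
Proof. by rewrite /dotp mulr_sumr; apply: eq_bigr => j _; rewrite mxE mulrCA. Qed.
Lemma dotp0 w : dotp w (0 : vec) = 0.
Proof. by rewrite /dotp big1 // => j _; rewrite mxE mulr0. Qed.
Lemma dotp_sum w m (c : 'I_m -> R) (s : 'I_m -> vec) :
  dotp w (\sum_i c i *: s i) = \sum_i c i * dotp w (s i).
Proof.
rewrite (big_morph (dotp w) (dotpD w) (dotp0 w)).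
by apply: eq_bigr => i _; rewrite dotpZ.
Qed.

End Basic.
Section Faces.
Variables (R : realFieldType) (n : nat).
Local Notation vec := 'rV[R]_n.
Local Notation mset := (mset R n).

Definition convex (A : mset) := forall x y s t, 0 <= s -> 0 <= t -> s + t = 1 ->
  A x -> A y -> A (s *: x + t *: y).

Lemma face_msum w (A B : mset) : face w (msum A B) = msum (face w A) (face w B).
Proof.
apply: mext => x; split.
- move=> [[a [b [Ha [Hb ->]]]] Hm].
  exists a, b; split; last split=> //.
  + split=> // y Hy; have := Hm (y + b).
    by rewrite !dotpD lerD2r; apply; exists y, b.
  + split=> // y Hy; have := Hm (a + y).
    by rewrite !dotpD lerD2l; apply; exists a, y.
- move=> [a [b [[Ha Hma] [[Hb Hmb] ->]]]].
  split; first by exists a, b.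
  move=> y [a' [b' [Ha' [Hb' ->]]]]; rewrite !dotpD.
  by apply: lerD; [apply: Hma | apply: Hmb].
Qed.

Lemma face_mzero w : face w (@mzero R n) = @mzero R n.
Proof.
apply: mext => x; split; first by case.
by move=> Hx; split=> // y ->; rewrite Hx.
Qed.

Lemma convex_mzero : convex (@mzero R n).
Proof. by move=> x y s t _ _ _ -> ->; rewrite !scaler0 addr0. Qed.

Lemma convex_msum (A B : mset) : convex A -> convex B -> convex (msum A B).
Proof.
move=> cA cB x y s t s0 t0 st [a [b [Ha [Hb ->]]]] [a' [b' [Ha' [Hb' ->]]]].
exists (s *: a + t *: a'), (s *: b + t *: b'); split; first exact: cA.
split; first exact: cB.
by rewrite !scalerDr addrACA.
Qed.

Lemma convex_face w (A : mset) : convex A -> convex (face w A).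
Proof.
move=> cA x y s t s0 t0 st [Hx Mx] [Hy My]; split; first exact: cA.
move=> z Hz; rewrite dotpD !dotpZ.
have -> : dotp w z = s * dotp w z + t * dotp w z by rewrite -mulrDl st mul1r.
by apply: lerD; apply: ler_wpM2l => //; [apply: Mx | apply: My].
Qed.

Lemma convex_slice u (A : mset) i : convex A -> convex (slice u A i).
Proof.
move=> cA x y s t s0 t0 st [Hx Px] [Hy Py]; split; first exact: cA.
by rewrite psiD !psiZ Px Py -mulrDl st mul1r.
Qed.

Lemma convex_conv (S : seq vec) : convex (conv S).
Proof.
move=> x y s t s0 t0 st [c [c0 [c1 ->]]] [d [d0 [d1 ->]]].
exists (fun i => s * c i + t * d i); split.
  by move=> i; apply: addr_ge0; apply: mulr_ge0.
split; first by rewrite big_split /= -!mulr_sumr c1 d1 !mulr1.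
rewrite !scaler_sumr -big_split /=; apply: eq_bigr => i _.
by rewrite scalerDl !scalerA.
Qed.

Lemma convex_polytope (A : mset) : is_polytope A -> convex A.
Proof. by move=> [S [_ /seteqE ->]]; apply: convex_conv. Qed.

Lemma convex_range a b (F : int -> mset) : (forall i, convex (F i)) ->
  convex (msum_range a b F).
Proof.
move=> h; rewrite /msum_range.
elim: (iota _ _) => [|k s IH] /=; first exact: convex_mzero.
exact: convex_msum.
Qed.

Lemma face_foldr w (s : seq mset) :
  face w (foldr (@msum R n) (@mzero R n) s) =
  foldr (@msum R n) (@mzero R n) (map (face w) s).
Proof. by elim: s => [|A s IH] /=; rewrite ?face_mzero // face_msum IH. Qed.

End Faces.
Section Ranges.
Variables (R : realFieldType) (n : nat).
Local Notation vec := 'rV[R]_n.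
Local Notation mset := (mset R n).

Lemma foldr_cat_msum (s1 s2 : seq mset) :
  foldr (@msum R n) (@mzero R n) (s1 ++ s2) =
  msum (foldr (@msum R n) (@mzero R n) s1) (foldr (@msum R n) (@mzero R n) s2).
Proof. by elim: s1 => [|A s IH] /=; rewrite ?msum0l // IH msumA. Qed.

Lemma face_range w a b (F : int -> mset) :
  face w (msum_range a b F) = msum_range a b (fun i => face w (F i)).
Proof. by rewrite /msum_range face_foldr -map_comp. Qed.

Lemma range_eq a b (F : int -> mset) : a <= b ->
  msum_range a b F = foldr (@msum R n) (@mzero R n)
     [seq F (a + k%:Z) | k <- iota 0 `|b - a|%N].
Proof.
rewrite le_eqVlt => /orP [/eqP <-|ab]; last by rewrite /msum_range ab.
by rewrite /msum_range ltxx subrr.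
Qed.

Lemma range_split a c b (F : int -> mset) : a <= c -> c <= b ->
  msum_range a b F = msum (msum_range a c F) (msum_range c b F).
Proof.
move=> ac cb; rewrite !range_eq //; last exact: le_trans cb.
have -> : `|b - a|%N = (`|c - a| + `|b - c|)%N.
  apply/eqP; rewrite -eqz_nat PoszD !gez0_abs ?subr_ge0 //; last exact: le_trans cb.
  by rewrite [c - a + _]addrC addrA subrK.
rewrite iotaD map_cat foldr_cat_msum add0n; congr msum.
rewrite -{1}(addn0 `|c - a|%N) iotaDl -map_comp; congr foldr; apply: eq_map => k /=.
by rewrite PoszD addrA gez0_abs ?subr_ge0 // [a + _]addrC subrK.
Qed.

Lemma range_congr a b (F G : int -> mset) :
  (forall i, a <= i -> i < b -> F i = G i) -> msum_range a b F = msum_range a b G.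
Proof.
move=> h; rewrite /msum_range; case: ifP => ab //.
congr foldr; apply/eq_in_map => k; rewrite mem_iota add0n => /andP [_ kb].
apply: h; first by rewrite lerDl.
have : (k%:Z < `|b - a|%N%:Z) by rewrite ltz_nat.
by rewrite gez0_abs ?subr_ge0 ?ltW // ltrBrDl.
Qed.

End Ranges.
Section Extrema.
Variables (R : realFieldType) (n : nat).
Local Notation vec := 'rV[R]_n.
Local Notation mset := (mset R n).

Lemma lo_spec u (Q : mset) : (exists z : int, is_min_val u Q z%:~R) ->
  is_min_val u Q (psi_lo u Q)%:~R.
Proof. move=> h; exact: (epsilon_spec (inhabits 0%R) _ h). Qed.

Lemma hi_spec u (Q : mset) : (exists z : int, is_max_val u Q z%:~R) ->
  is_max_val u Q (psi_hi u Q)%:~R.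
Proof. move=> h; exact: (epsilon_spec (inhabits 0%R) _ h). Qed.

Lemma min_msum u (A B : mset) m1 m2 : is_min_val u A m1 -> is_min_val u B m2 ->
  is_min_val u (msum A B) (m1 + m2).
Proof.
move=> [[a [Ha <-]] ha] [[b [Hb <-]] hb]; split.
  by exists (a + b); split; [exists a, b | rewrite psiD].
move=> x [a' [b' [Ha' [Hb' ->]]]]; rewrite psiD.
by apply: lerD; [apply: ha | apply: hb].
Qed.

Lemma max_msum u (A B : mset) m1 m2 : is_max_val u A m1 -> is_max_val u B m2 ->
  is_max_val u (msum A B) (m1 + m2).
Proof.
move=> [[a [Ha <-]] ha] [[b [Hb <-]] hb]; split.
  by exists (a + b); split; [exists a, b | rewrite psiD].
move=> x [a' [b' [Ha' [Hb' ->]]]]; rewrite psiD.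
by apply: lerD; [apply: ha | apply: hb].
Qed.

Lemma max_of_min u (Q : mset) m : is_min_val (- u) Q (- m) -> is_max_val u Q m.
Proof.
move=> [[x [Hx]]]; rewrite psiN => /eqP; rewrite eqr_opp => /eqP Px h.
split; first by exists x.
by move=> y Hy; have := h y Hy; rewrite psiN lerN2.
Qed.

Lemma ex_argmin (T : eqType) (P : T -> Prop) (f : T -> R) (s : seq T) :
  (exists x, x \in s /\ P x) ->
  exists x, x \in s /\ P x /\ forall y, y \in s -> P y -> f x <= f y.
Proof.
elim: s => [[x [] //]|a s IH] h.
case: (Classical_Prop.classic (exists x, x \in s /\ P x)) => [/IH [x [xs [Px hx]]]|ns].
  case: (Classical_Prop.classic (P a)) => Pa.
    case: (leP (f a) (f x)) => fax.
      exists a; split; first by rewrite inE eqxx.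
      split=> // y; rewrite inE => /orP [/eqP -> //|ys Py].
      exact: le_trans fax (hx y ys Py).
    exists x; split; first by rewrite inE xs orbT.
    split=> // y; rewrite inE => /orP [/eqP -> _|ys Py]; first exact: ltW.
    exact: hx.
  exists x; split; first by rewrite inE xs orbT.
  split=> // y; rewrite inE => /orP [/eqP -> //|ys Py]; exact: hx.
have Pa : P a.
  case: h => x [xs Px]; move: xs; rewrite inE => /orP [/eqP <- //|xs].
  by case: ns; exists x.
exists a; split; first by rewrite inE eqxx.
split=> // y; rewrite inE => /orP [/eqP -> //|ys Py].
by case: ns; exists y.
Qed.

Lemma psi_int u (x : vec) : integral_point x -> exists z : int, psi u x = z%:~R.
Proof.
move=> hx; rewrite /psi.
apply: (big_ind (fun r : R => exists z : int, r = z%:~R)).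
- by exists 0.
- by move=> _ _ [z1 ->] [z2 ->]; exists (z1 + z2); rewrite intrD.
- move=> j _; case: (hx j) => z ->; exists (u 0 j * z); by rewrite intrM.
Qed.

Lemma conv_nth (S : seq vec) (i : 'I_(size S)) : conv S S`_i.
Proof.
exists (fun j => (j == i)%:R); split; first by move=> j; rewrite ler0n.
split; first by rewrite (bigD1 i) //= eqxx big1 ?addr0 // => j /negbTE ->.
by rewrite (bigD1 i) //= eqxx scale1r big1 ?addr0 // => j /negbTE ->; rewrite scale0r.
Qed.

Lemma face_support w (S : seq vec) (x : vec) (c : 'I_(size S) -> R) :
  face w (conv S) x -> (forall i, 0 <= c i) -> \sum_i c i = 1 ->
  x = \sum_i c i *: S`_i -> forall i, 0 < c i -> face w (conv S) S`_i.
Proof.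
move=> [Hx Mx] c0 c1 xE i ci; split; first exact: conv_nth.
move=> y Hy; apply: le_trans (Mx y Hy) _.
case: (leP (dotp w x) (dotp w S`_i)) => // lt.
have : dotp w x < dotp w x.
  rewrite {1}xE dotp_sum.
  have -> : dotp w x = \sum_j c j * dotp w x by rewrite -mulr_suml c1 mul1r.
  rewrite (bigD1 i) //= [X in _ < X](bigD1 i) //=.
  apply: ltr_leD; first by rewrite ltr_pM2l.
  apply: ler_sum => j _; apply: ler_wpM2l => //.
  exact: Mx (conv_nth j).
by rewrite lt_irreflexive.
Qed.

Lemma lattice_min u (S : seq vec) (F : mset) :
  (forall x, x \in S -> integral_point x) -> (exists x, F x) ->
  (forall x, F x -> exists c : 'I_(size S) -> R, (forall i, 0 <= c i) /\
     \sum_i c i = 1 /\ x = \sum_i c i *: S`_i /\ forall i, 0 < c i -> F S`_i) ->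
  exists z : int, is_min_val u F z%:~R.
Proof.
move=> hS [x0 Hx0] hF.
have [i0 [_ [Fi0 hi0]]] : exists i, i \in enum 'I_(size S) /\ F S`_i /\
    forall j, j \in enum 'I_(size S) -> F S`_j -> psi u S`_i <= psi u S`_j.
  apply: ex_argmin.
  case: (hF x0 Hx0) => c [c0 [c1 [_ cF]]].
  have : exists i, 0 < c i.
    apply: Classical_Prop.NNPP => nc.
    have : \sum_i c i = 0.
      apply: big1 => i _; apply/eqP; rewrite eq_le c0 andbT.
      by rewrite leNgt; apply/negP => ci; apply: nc; exists i.
    by rewrite c1 => /eqP; rewrite oner_eq0.
  by case=> i ci; exists i; split; [rewrite mem_enum | apply: cF].
have [z zE] := psi_int u (hS _ (mem_nth 0 (ltn_ord i0))).
exists z; rewrite -zE; split; first by exists S`_i0.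
move=> x Hx; case: (hF x Hx) => c [c0 [c1 [-> cF]]].
rewrite psi_sum.
have -> : psi u S`_i0 = \sum_i c i * psi u S`_i0 by rewrite -mulr_suml c1 mul1r.
apply: ler_sum => i _.
have := c0 i; rewrite le_eqVlt => /orP [/eqP <-|ci]; first by rewrite !mul0r.
by apply: ler_wpM2l; [exact: ltW | apply: hi0; [rewrite mem_enum | apply: cF]].
Qed.

End Extrema.
Section Lattice.
Variables (R : realFieldType) (n : nat).
Local Notation vec := 'rV[R]_n.
Local Notation mset := (mset R n).

Lemma face_conv_nonempty w (S : seq vec) : S != [::] -> exists x, face w (conv S) x.
Proof.
move=> Sn.
have [i0 [_ [_ hi0]]] : exists i, i \in enum 'I_(size S) /\ True /\
    forall j, j \in enum 'I_(size S) -> True -> - dotp w S`_i <= - dotp w S`_j.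
  apply: ex_argmin.
  by case: S Sn => // a S _; exists ord0; rewrite mem_enum.
exists S`_i0; split; first exact: conv_nth.
move=> y [c [c0 [c1 ->]]]; rewrite dotp_sum.
have -> : dotp w S`_i0 = \sum_i c i * dotp w S`_i0 by rewrite -mulr_suml c1 mul1r.
apply: ler_sum => i _; apply: ler_wpM2l => //.
by rewrite -lerN2; apply: hi0; rewrite ?mem_enum.
Qed.

Lemma min_to_max u (F : mset) : (exists z : int, is_min_val (- u) F z%:~R) ->
  exists z : int, is_max_val u F z%:~R.
Proof.
move=> [z hz]; exists (- z); apply: max_of_min.
by rewrite intrN opprK.
Qed.

Lemma lattice_specs u w (Q : mset) : lattice_polytope Q ->
  [/\ convex Q, (exists x, Q x), (exists x, face w Q x),
      (exists z : int, is_min_val u Q z%:~R) /\ (exists z : int, is_max_val u Q z%:~R)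
    & (exists z : int, is_min_val u (face w Q) z%:~R) /\
      (exists z : int, is_max_val u (face w Q) z%:~R)].
Proof.
move=> [S [Sn [hS /seteqE ->]]].
have ne : exists x, conv S x.
  by case: S Sn {hS} => // a S _; exists (a :: S)`_(@ord0 (size S)); apply: conv_nth.
have fne := face_conv_nonempty w Sn.
have hQ : forall v : 'rV[int]_n, exists z : int, is_min_val v (conv S) z%:~R.
  move=> v; apply: lattice_min; [exact: hS | exact: ne | move=> x [c [c0 [c1 xE]]]].
  by exists c; do 3!split=> //; move=> i _; apply: conv_nth.
have hF : forall v : 'rV[int]_n, exists z : int, is_min_val v (face w (conv S)) z%:~R.
  move=> v; apply: lattice_min; [exact: hS | exact: fne | move=> x Fx].
  case: (Fx) => [[c [c0 [c1 xE]]] _].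
  exists c; do 3!split=> //.
  exact: face_support Fx c0 c1 xE.
split=> //; first exact: convex_conv.
- by split; [apply: hQ | apply: min_to_max; apply: hQ].
- by split; [apply: hF | apply: min_to_max; apply: hF].
Qed.

End Lattice.
Section FaceFiber.
Variables (R : realFieldType) (n : nat).
Local Notation vec := 'rV[R]_n.
Local Notation mset := (mset R n).

Lemma bracket_mid u w (Q : mset) (l h i : int) : convex Q ->
  is_min_val u (face w Q) l%:~R -> is_max_val u (face w Q) h%:~R ->
  l <= i -> i < h -> bracket u w Q i = slice u (face w Q) i.
Proof.
move=> cQ [[x1 [F1 P1]] _] [[x2 [F2 P2]] _] li ih.
set t : R := i%:~R + 2^-1.
have two0 : (0 : R) < 2 by [].
have hlt : (l%:~R : R) <= t.
  by rewrite /t; apply: ler_wpDr; [rewrite invr_ge0 ltW | rewrite ler_int].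
have hth : t <= h%:~R.
  apply: (@le_trans _ _ (i%:~R + 1)).
    by rewrite /t lerD2l invf_le1 // ler1n.
  by rewrite -(intrD _ i 1) ler_int lezD1.
have dpos : (0 : R) < h%:~R - l%:~R.
  rewrite subr_gt0 ltr_int; exact: le_lt_trans li ih.
set lam := (t - l%:~R) / (h%:~R - l%:~R).
have lam0 : 0 <= lam by apply: divr_ge0; [rewrite subr_ge0 | exact: ltW].
have lam1 : lam <= 1 by rewrite /lam ler_pdivrMr // mul1r lerD2r.
set z := (1 - lam) *: x1 + lam *: x2.
have Fz : face w Q z.
  apply: convex_face => //; first by rewrite subr_ge0.
  by rewrite subrK.
have Pz : psi u z = t.
  rewrite /z psiD !psiZ P1 P2 mulrBl mul1r -addrA [- _ + _]addrC -mulrBr.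
  by rewrite /lam divfK ?gt_eqF // addrC subrK.
apply: mext => x; split.
- move=> [[Qx Px] Mx]; split=> //; split=> // y Qy.
  apply: le_trans (Mx z _); first by case: Fz => _; apply.
  by split=> //; case: Fz.
- move=> [[Qx Mx] Px]; split; first by split.
  by move=> y [Qy _]; apply: Mx.
Qed.

Lemma face_fiber u w (Q : mset) : convex Q ->
  is_min_val u Q (psi_lo u Q)%:~R -> is_max_val u Q (psi_hi u Q)%:~R ->
  is_min_val u (face w Q) (psi_lo u (face w Q))%:~R ->
  is_max_val u (face w Q) (psi_hi u (face w Q))%:~R ->
  face w (fiber u Q) = msum (fiber u (face w Q))
    (msum (msum_range (psi_lo u Q) (psi_lo u (face w Q)) (bracket u w Q))
          (msum_range (psi_hi u (face w Q)) (psi_hi u Q) (bracket u w Q))).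
Proof.
move=> cQ mQ MQ mF MF.
have [[x1 [F1 P1]] _] := mF.
have [_ hMF] := MF.
have [_ hmQ] := mQ.
have [[x2 [F2 P2]] hMQ] := MQ.
have le1 : psi_lo u Q <= psi_lo u (face w Q).
  by rewrite -(ler_int R) -P1; apply: hmQ; case: F1.
have le2 : psi_lo u (face w Q) <= psi_hi u (face w Q).
  by rewrite -(ler_int R) -P1; apply: hMF.
have le3 : psi_hi u (face w Q) <= psi_hi u Q.
  have [[x3 [F3 P3]] _] := MF.
  by rewrite -(ler_int R) -P3; apply: hMQ; case: F3.
rewrite /fiber face_range.
rewrite (@range_split _ _ _ (psi_lo u (face w Q))) //; last exact: le_trans le3.
rewrite (@range_split _ _ (psi_lo u (face w Q)) (psi_hi u (face w Q))) //.
rewrite (@range_congr _ _ (psi_lo u (face w Q)) (psi_hi u (face w Q))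
  _ (slice u (face w Q))); last first.
  by move=> i li ih; apply: (@bracket_mid u w Q _ _ i cQ mF MF).
by rewrite msumCA.
Qed.

End FaceFiber.
Section Markov.
Variables (R : realFieldType) (n : nat).
Local Notation vec := 'rV[R]_n.
Local Notation mset := (mset R n).

Lemma good_add (B : mset) (cB : convex B) c1 c2 r (z1 z2 : vec) :
  0 < c1 -> B (c1^-1 *: z1) -> 0 < c2 -> B (c2^-1 *: z2) -> 0 <= r ->
  0 < c1 + r * c2 /\ B ((c1 + r * c2)^-1 *: (z1 + r *: z2)).
Proof.
move=> c10 B1 c20 B2 r0.
have cp : 0 < c1 + r * c2 by apply: ltr_wpDr => //; apply: mulr_ge0 => //; exact: ltW.
split=> //.
have -> : (c1 + r * c2)^-1 *: (z1 + r *: z2) =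
   (c1 / (c1 + r * c2)) *: (c1^-1 *: z1) + (r * c2 / (c1 + r * c2)) *: (c2^-1 *: z2).
  rewrite scalerDr !scalerA; congr (_ + _).
    by rewrite mulrAC mulfV ?gt_eqF // mul1r.
  by rewrite mulrAC -(mulrA r) mulfV ?gt_eqF // mulr1 mulrC.
apply: cB => //.
- by apply: divr_ge0; exact: ltW.
- by apply: divr_ge0; [apply: mulr_ge0 => //; exact: ltW | exact: ltW].
- by rewrite -mulrDl mulfV ?gt_eqF.
Qed.

Lemma good_eq (B : mset) c (z a : vec) : 0 < c -> B (c^-1 *: z) -> c *: a = z -> B a.
Proof. by move=> c0 + E; rewrite -E scalerA mulVf ?gt_eqF // scale1r. Qed.

Lemma markov (B : mset) (cB : convex B) (a : vec) : forall m (c : nat -> R)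
  (z t : nat -> vec) (P : nat -> nat -> R),
  (forall i, (i <= m)%N -> [/\ 0 < c i, B ((c i)^-1 *: z i), (forall j, 0 <= P i j),
     \sum_(j < m.+1) P i j = 1 & c i *: a + t i = z i + \sum_(j < m.+1) P i j *: t j]) ->
  B a.
Proof.
elim=> [|m IH] c z t P h.
  have [c0 Bz _ s1 E] := h 0%N (leqnn _).
  move: s1 E; rewrite !big_ord1 => -> ; rewrite scale1r => /addIr.
  exact: good_eq c0 Bz.
have [cm Bm Pm sm Em] := h m.+1 (leqnn _).
move: sm Em; rewrite /= !(@big_ord_recr _ _ _ m.+1) /=.
set q := P m.+1 m.+1.
set S := \sum_(j < m.+1) P m.+1 j *: t j.
move=> sm Em.
have S0 : 0 <= \sum_(j < m.+1) P m.+1 j by apply: sumr_ge0.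
have [q1|qn1] := eqVneq q 1.
  have s0 : \sum_(j < m.+1) P m.+1 j = 0.
    by move: sm; rewrite q1 -{2}(add0r 1) => /(addIr _).
  have SE : S = 0.
    rewrite /S big1 // => j _.
    by rewrite (psumr_eq0P (fun (j : 'I_m.+1) _ => Pm j) s0 isT) scale0r.
  move: Em; rewrite SE add0r q1 scale1r => /(addIr _).
  exact: good_eq cm Bm.
have qlt : 0 < 1 - q.
  rewrite subr_gt0 lt_neqAle qn1 /= -sm lerDr; exact: S0.
set r := fun i => P i m.+1 / (1 - q).
apply: (IH (fun i => c i + r i * c m.+1) (fun i => z i + r i *: z m.+1) t
            (fun i j => P i j + r i * P m.+1 j)) => i im.
have [ci Bi Pi si Ei] := h i (leqW im).
move: si Ei; rewrite /= !(@big_ord_recr _ _ _ m.+1) /= => si Ei.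
have r0 : 0 <= r i by apply: divr_ge0 => //; exact: ltW.
have [gc gB] := good_add cB ci Bi cm Bm r0.
have rq : r i * (1 - q) = P i m.+1 by rewrite /r divfK ?gt_eqF.
split=> //.
- by move=> j; apply: addr_ge0 => //; apply: mulr_ge0.
- rewrite big_split /= -mulr_sumr.
  have -> : \sum_(j < m.+1) P m.+1 j = 1 - q by rewrite -sm addrK.
  by rewrite rq -si.
- have Em' : (1 - q) *: t m.+1 = z m.+1 + S - c m.+1 *: a.
    rewrite scalerBl scale1r -/q.
    apply: (addrI (c m.+1 *: a)); rewrite addrA Em.
    by rewrite addrA addrK [RHS]addrC subrK.
  have Ep : P i m.+1 *: t m.+1 = r i *: (z m.+1 + S - c m.+1 *: a).
    by rewrite -Em' scalerA rq.
  have -> : \sum_(j < m.+1) (P i j + r i * P m.+1 j) *: t j =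
      \sum_(j < m.+1) P i j *: t j + r i *: S.
    rewrite /S scaler_sumr -big_split; apply: eq_bigr => j _.
    by rewrite scalerDl scalerA.
  rewrite scalerDl addrAC Ei Ep !scalerDr scalerN scalerA -!addrA addNr addr0.
  by congr (_ + _); rewrite addrCA.
Qed.

End Markov.
Section Cancel.
Variables (R : realFieldType) (n : nat).
Local Notation vec := 'rV[R]_n.
Local Notation mset := (mset R n).

Lemma cancel_sub (X Y : mset) (S : seq vec) : S != [::] -> convex Y ->
  (forall x, msum X (conv S) x -> msum Y (conv S) x) -> forall a, X a -> Y a.
Proof.
case: S => // s0 S' _ cY hsub a Xa.
set S := s0 :: S'.
have H : forall i : 'I_(size S), exists p : vec * ('I_(size S) -> R),
    [/\ Y p.1, (forall j, 0 <= p.2 j), \sum_j p.2 j = 1 &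
        a + S`_i = p.1 + \sum_j p.2 j *: S`_j].
  move=> i.
  have : msum Y (conv S) (a + S`_i) by apply: hsub; exists a, S`_i; split=> //; split=> //; exact: conv_nth.
  move=> [y [k [Yy [[c [c0 [c1 kE]]] E]]]].
  by exists (y, c); split=> //=; rewrite E kE.
have [f hf] : exists f : 'I_(size S) -> vec * ('I_(size S) -> R),
    forall i, [/\ Y (f i).1, (forall j, 0 <= (f i).2 j), \sum_j (f i).2 j = 1 &
        a + S`_i = (f i).1 + \sum_j (f i).2 j *: S`_j].
  exists (fun i => proj1_sig (constructive_indefinite_description _ (H i))).
  by move=> i; exact: (proj2_sig (constructive_indefinite_description _ (H i))).
apply: (@markov R n Y cY a (size S') (fun _ => 1) (fun i => (f (inord i)).1)
   (fun i => S`_i) (fun i j => (f (inord i)).2 (inord j))) => i im.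
have [Yi Pi si Ei] := hf (inord i).
split=> //.
- by rewrite invr1 scale1r.
- by rewrite -si; apply: eq_bigr => j _; rewrite inord_val.
- rewrite scale1r.
  have -> : S`_i = S`_(@inord (size S') i) by rewrite inordK // ltnS.
  by rewrite Ei; congr (_ + _); apply: eq_bigr => j _; rewrite inord_val.
Qed.

Lemma cancel_eq (X Y : mset) (K : mset) : is_polytope K -> convex X -> convex Y ->
  msum X K = msum Y K -> X = Y.
Proof.
move=> [S [Sn /seteqE ->]] cX cY E.
apply: mext => x; split.
- by apply: (cancel_sub Sn cY) => y; rewrite E.
- by apply: (cancel_sub Sn cX) => y; rewrite E.
Qed.

End Cancel.
Lemma convex_B (R : realFieldType) (n : nat) (u : 'rV[int]_n) (w : 'rV[R]_n)
  (Q : mset R n) a b c d : convex Q ->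
  convex (msum (msum_range a b (bracket u w Q)) (msum_range c d (bracket u w Q))).
Proof.
move=> cQ; apply: convex_msum; apply: convex_range => i;
  by apply: convex_face; apply: convex_slice.
Qed.

Unset Implicit Arguments.

Theorem theorem4p9 (R : realFieldType) (n : nat) (u : 'rV[int]_n)
  (C D : mset R n) (w : 'rV[R]_n)
  (hC : lattice_polytope C) (hD : lattice_polytope D)
  (M : mset R n) (hM : is_mixed_fiber u C D M)
  (Mf : mset R n) (hMf : is_mixed_fiber u (face w C) (face w D) Mf) :
  let CD := msum C D in
  seteq
    (msum Mf
      (msum (msum_range (psi_lo u CD) (psi_lo u (face w CD)) (bracket u w CD))
            (msum_range (psi_hi u (face w CD)) (psi_hi u CD) (bracket u w CD))))
    (msum (face w M)
      (msum (msum (msum_range (psi_lo u C) (psi_lo u (face w C)) (bracket u w C))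
                  (msum_range (psi_hi u (face w C)) (psi_hi u C) (bracket u w C)))
            (msum (msum_range (psi_lo u D) (psi_lo u (face w D)) (bracket u w D))
                  (msum_range (psi_hi u (face w D)) (psi_hi u D) (bracket u w D))))).
Proof.
move=> CD.
have [cC neC nefC [mC MC] [mfC MfC]] := lattice_specs u w hC.
have [cD neD nefD [mD MD] [mfD MfD]] := lattice_specs u w hD.
have mC' := lo_spec mC; have MC' := hi_spec MC.
have mfC' := lo_spec mfC; have MfC' := hi_spec MfC.
have mD' := lo_spec mD; have MD' := hi_spec MD.
have mfD' := lo_spec mfD; have MfD' := hi_spec MfD.
have cCD : convex CD by apply: convex_msum.
have fCD : face w CD = msum (face w C) (face w D) by rewrite /CD face_msum.
have mCD' : is_min_val u CD (psi_lo u CD)%:~R.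
  apply: lo_spec; exists (psi_lo u C + psi_lo u D); rewrite intrD; exact: min_msum.
have MCD' : is_max_val u CD (psi_hi u CD)%:~R.
  apply: hi_spec; exists (psi_hi u C + psi_hi u D); rewrite intrD; exact: max_msum.
have mfCD' : is_min_val u (face w CD) (psi_lo u (face w CD))%:~R.
  apply: lo_spec; exists (psi_lo u (face w C) + psi_lo u (face w D)).
  rewrite intrD fCD; exact: min_msum.
have MfCD' : is_max_val u (face w CD) (psi_hi u (face w CD))%:~R.
  apply: hi_spec; exists (psi_hi u (face w C) + psi_hi u (face w D)).
  rewrite intrD fCD; exact: max_msum.
have FC := face_fiber cC mC' MC' mfC' MfC'.
have FD := face_fiber cD mD' MD' mfD' MfD'.
have FCD := face_fiber cCD mCD' MCD' mfCD' MfCD'.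
case: hM => [M20 [M02 [pM20 [pM02 [pM hMe]]]]].
case: hMf => [N20 [N02 [pN20 [pN02 [pN hNe]]]]].
have neP : forall P : mset R n, is_polytope P -> exists x, P x.
  move=> P [S [Sn /seteqE ->]].
  by case: S Sn => // a S _; exists (a :: S)`_(@ord0 (size S)); apply: conv_nth.
have E11 := seteqE (hMe 1%N 1%N).
have E10 := seteqE (hMe 1%N 0%N).
have E01 := seteqE (hMe 0%N 1%N).
have G11 := seteqE (hNe 1%N 1%N).
have G10 := seteqE (hNe 1%N 0%N).
have G01 := seteqE (hNe 0%N 1%N).
move: E11 E10 E01 G11 G10 G01.
rewrite /= ?exp1n ?muln1 ?mul1n ?muln0 ?mul0n ?mulr1n ?mulr0n !mscale1.
rewrite (mscale0 neC) (mscale0 neD) (mscale0 nefC) (mscale0 nefD).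
rewrite (mscale0 (neP _ pM20)) (mscale0 (neP _ pM02)) (mscale0 (neP _ pM)).
rewrite (mscale0 (neP _ pN20)) (mscale0 (neP _ pN02)) (mscale0 (neP _ pN)).
rewrite !msum0r !msum0l => E11 E10 E01 G11 G10 G01.
rewrite -/CD in E11.
set BC := msum (msum_range _ _ (bracket u w C)) _ in FC *.
set BD := msum (msum_range _ _ (bracket u w D)) _ in FD *.
set BCD := msum (msum_range _ _ (bracket u w CD)) _ in FCD *.
have cX : convex (msum (face w M) (msum BC BD)).
  apply: convex_msum; first by apply: convex_face; apply: convex_polytope.
  by apply: convex_msum; apply: convex_B.
have cY : convex (msum Mf BCD).
  by apply: convex_msum; [apply: convex_polytope | apply: convex_B].
clearbody BC BD BCD.
have key : msum (msum (msum (face w M) (msum BC BD)) N02) N20 =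
           msum (msum (msum Mf BCD) N02) N20.
  have := FCD; rewrite E11 !face_msum -E10 -E01 FC FD G11 G10 G01 => E.
  rewrite -!msumA (msumC N02 N20) (msumCA BD N20) (msumCA BC N20) (msumCA (face w M) N20).
  rewrite (msumCA (face w M) BC) (msumC BD N02) (msumCA BCD N20) (msumCA Mf N20).
  rewrite (msumC BCD N02).
  by move: E; rewrite -!msumA.
have key2 := cancel_eq pN20 (convex_msum cX (convex_polytope pN02))
   (convex_msum cY (convex_polytope pN02)) key.
rewrite (cancel_eq pN02 cX cY key2).
by move=> x; split.
Qed.
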